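(* Let $N,h,Q\in\mathbb N$ with $h\to\infty$, $h=o(N)$ and $Q\ll N$ as $N\to\infty$. Let $g:\mathbb N\to\mathbb R$ with $g(q)=0$ for all $q>Q$, and let $f=g\ast\mathbf 1$, i.e. $f(n)=\sum_{d\mid n}g(d)$. Then for every nonzero integer $a\le N$, $$\mathcal C_f(a)=\sum_{\ell\mid a}\ \sum_{\substack{d,q\ge1\\(d,q)=1}}g(\ell d)g(\ell q)\frac1q\left(\left\lfloor\frac{2N}{\ell d}\right\rfloor-\left\lfloor\frac{N}{\ell d}\right\rfloor\right)+R_f(a),$$ where $$R_f(a)=\sum_{\ell\mid a}\ \sum_{\substack{d,q\ge1\\(d,q)=1}}g(\ell d)g(\ell q)\frac1q\sum_{j=1}^{q-1}e_q(-ja/\ell)\sum_{N/(\ell d)<m\le 2N/(\ell d)}e_q(jdm).$$ Moreover, for every even function $K:\mathbb Z\to\mathbb C$ supported in $[-2h,2h]$ with $K(0)=2h$, and $N$ sufficiently large (so that $2h\le N$), $$\sum_{a\ne0}K(a)R_f(a)+K(0)\,\mathcal C_f(0)=\sum_{\ell\le 2h}\ \sum_{\substack{d,q\ge1\\(d,q)=1}}g(\ell d)g(\ell q)\frac1q\sum_{j=1}^{q-1}\ \sum_{N/(\ell d)<m\le 2N/(\ell d)}\cos\frac{2\pi jdm}{q}\sum_{a\ne0}K(a\ell)e_q(ja)+2h\,\mathcal C_f(0).$$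
   Context: $e(\theta)=e^{2\pi i\theta}$ and $e_q(m)=e(m/q)$. $\lfloor\cdot\rfloor$ is the integer part. $\ell\mid a$ ranges over positive divisors $\ell$ of $a$. The notation $n\sim N$ means $N<n\le 2N$, and for integers $a\le N$, $\mathcal C_f(a)=\sum_{n\sim N}f(n)f(n-a)$. *)

(* Defs.v *)
From mathcomp Require Import all_boot all_algebra.
From mathcomp Require Import complex.
From mathcomp Require Import reals trigo.
Import GRing.Theory Num.Theory.
Local Open Scope ring_scope.
Local Open Scope complex_scope.

Set Implicit Arguments.
Unset Strict Implicit.
Unset Printing Implicit Defensive.

Section Defs.
Variable R : realType.

Definition ee (x : R) : R[i] := (cos (2 * pi * x)) +i* (sin (2 * pi * x)).

Definition eq_ (q : nat) (x : R) : R[i] := ee (x / q%:R).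

Definition convf (g : nat -> R) (n : nat) : R := \sum_(d <- divisors n) g d.

(* C_f(a) = sum_{N < n <= 2N} f(n) f(n - a); here n - a is computed in int
   and is positive whenever a <= N, which is the range where it is used. *)
Definition Cf (f : nat -> R) (N : nat) (a : int) : R :=
  \sum_(N.+1 <= n < (2 * N).+1) f n * f `|n%:Z - a|%N.

(* sum over d, q >= 1 with (d,q) = 1, truncated at Q (all nonzero terms
   of the sums below have d, q <= Q since g vanishes beyond Q). *)
Definition sum_cop (Q : nat) (F : nat -> nat -> R[i]) : R[i] :=
  \sum_(1 <= d < Q.+1) \sum_(1 <= q < Q.+1 | coprime d q) F d q.

(* sum over integers m with N/(l d) < m <= 2N/(l d) (only m <= 2N can occur) *)
Definition sum_m (N l d : nat) (F : nat -> R[i]) : R[i] :=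
  \sum_(0 <= m < (2 * N).+1 |
          (N%:R / (l * d)%:R < m%:R :> R) && (m%:R <= (2 * N)%:R / (l * d)%:R :> R))
     F m.

Definition sum_nz (M : nat) (F : int -> R[i]) : R[i] :=
  \sum_(i < (2 * M).+1 | i%:Z - M%:Z != 0) F (i%:Z - M%:Z).

Definition MT (g : nat -> R) (N Q : nat) (a : int) : R[i] :=
  \sum_(l <- divisors `|a|%N) sum_cop Q (fun d q =>
     (g (l * d)%N * g (l * q)%N / q%:R *
       (((2 * N) %/ (l * d))%N%:R - (N %/ (l * d))%N%:R))%:C).

Definition Rf (g : nat -> R) (N Q : nat) (a : int) : R[i] :=
  \sum_(l <- divisors `|a|%N) sum_cop Q (fun d q =>
     (g (l * d)%N * g (l * q)%N / q%:R)%:C *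
     \sum_(1 <= j < q)
        eq_ q (- (j%:R * a%:~R) / l%:R) *
        sum_m N l d (fun m => eq_ q (j%:R * d%:R * m%:R))).

End Defs.

(* Main.v *)
Require Import Defs.
From mathcomp Require Import all_boot all_order all_algebra.
From mathcomp Require Import complex.
From mathcomp Require Import reals trigo.
From mathcomp Require Import ring lra zify.
Import Order.TTheory GRing.Theory Num.Theory.
Local Open Scope ring_scope.
Local Open Scope complex_scope.

Section EE.
Variable R : realType.
Local Notation C := R[i].

Lemma eeD (x y : R) : ee (x + y) = ee x * ee y.
Proof.
rewrite /ee mulrDr cosD sinD.
by apply/eqP; rewrite eq_complex /= eqxx /= addrC eqxx.
Qed.

Lemma ee0 : ee (0:R) = 1.
Proof. by rewrite /ee mulr0 cos0 sin0. Qed.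

Lemma ee1 : ee (1:R) = 1.
Proof. by rewrite /ee mulr1 mulr_natl cos2pi sin2pi. Qed.

Lemma eeN (x : R) : ee (- x) * ee x = 1.
Proof. by rewrite -eeD addNr ee0. Qed.

Lemma ee_nat (n : nat) : ee (n%:R : R) = 1.
Proof. by elim: n => [|n IH]; rewrite ?ee0 // -natr1 eeD IH ee1 mulr1. Qed.

Lemma ee_int (k : int) : ee (k%:~R : R) = 1.
Proof.
case: k => n; first exact: ee_nat.
have H := eeN (n.+1%:R); rewrite ee_nat mulr1 in H.
by rewrite NegzE mulrNz.
Qed.

Lemma cos_lt1 (t : R) : 0 < t < 1 -> cos (2 * pi * t) < 1.
Proof.
move=> /andP[t0 t1].
have pi0 : (0:R) < pi := pi_gt0 _.
have H : forall u : R, 0 < u <= pi -> cos u < 1.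
  move=> u /andP[u0 upi]; rewrite -cos0.
  rewrite ltr_cos //; rewrite in_itv /=.
    by rewrite lexx (ltW pi0).
  by rewrite (ltW u0) upi.
case: (lerP (2 * pi * t) pi) => hp.
  by apply: H; rewrite hp andbT; apply: mulr_gt0 => //; apply: mulr_gt0.
rewrite -cosN -(cosD2pi _ ) .
apply: H; apply/andP; split.
  rewrite -mulr_natl; have : 2 * pi * t < 2 * pi by rewrite -{2}(mulr1 (2*pi)) ltr_pM2l // mulr_gt0.
  lra.
rewrite -mulr_natl; lra.
Qed.

Lemma ee_ne1 (t : R) : 0 < t < 1 -> ee t != 1.
Proof.
move=> /cos_lt1 h; apply/negP => /eqP E.
have := congr1 (@complex.Re R) E; rewrite /= => E'.
by move: h; rewrite E' ltxx.
Qed.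

Lemma ee_pow (x : R) (j : nat) : ee (j%:R * x) = ee x ^+ j.
Proof.
elim: j => [|j IH]; first by rewrite mul0r ee0 expr0.
by rewrite -natr1 mulrDl mul1r eeD IH exprSr.
Qed.

Lemma ee_sum (q : nat) (k : int) : (0 < q)%N ->
  \sum_(0 <= j < q) ee (j%:R * k%:~R / q%:R : R) = if (q%:Z %| k)%Z then (q%:R : R[i]) else 0.
Proof.
move=> q0.
have qR : (q%:R : R) != 0 by rewrite pnatr_eq0 -lt0n.
under eq_bigr do rewrite -mulrA ee_pow.
case: ifP => dv.
  have [c ->] := dvdzP dv.
  rewrite intrM mulrK; last by rewrite unitfE intr_eq0 -lt0n.
  rewrite (ee_int c).
  under eq_bigr do rewrite expr1n.
  by rewrite sumr_const_nat subn0.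
set z := ee _.
have zq : z ^+ q = 1.
  by rewrite -ee_pow mulrCA mulfV // mulr1 ee_int.
have zn1 : z != 1.
  have qz : q%:Z != 0 by rewrite -lt0n.
  rewrite /z {1}(divz_eq k q%:Z) intrD mulrDl eeD intrM mulrK; last by rewrite unitfE intr_eq0 -lt0n.
  rewrite ee_int mul1r.
  apply: ee_ne1.
  have r0 := modz_ge0 k qz.
  have rq := ltz_mod k qz.
  have rn0 : (k %% q%:Z)%Z != 0 by apply/negP => /eqP/dvdz_mod0P; rewrite dv.
  move: r0 rq rn0; case: (k %% q%:Z)%Z => // r _ rq rn0.
  rewrite /= in rq.
  have qpos : (0:R) < q%:R by rewrite ltr0n.
  rewrite divr_gt0 ?ltr0n ?lt0n //=.
  rewrite ltr_pdivrMr // mul1r.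
  change ((r%:R : R) < q%:R); rewrite ltr_nat.
  move: rq; rewrite /Num.norm /=. lia.
have := subrX1 z q; rewrite zq subrr => /esym/eqP.
rewrite mulf_eq0 subr_eq0 (negbTE zn1) /= => /eqP.
by rewrite big_mkord.
Qed.

End EE.

Lemma big_reindex_seq (I J : eqType) (V : zmodType) (s : seq I) (t : seq J)
  (P : pred I) (Q : pred J) (phi : I -> J) (F : J -> V) :
  uniq s -> uniq t ->
  {in [pred i | (i \in s) && P i] &, injective phi} ->
  (forall i, i \in s -> P i -> (phi i \in t) && Q (phi i)) ->
  (forall j, j \in t -> Q j -> exists2 i, (i \in s) && P i & j = phi i) ->
  \sum_(i <- s | P i) F (phi i) = \sum_(j <- t | Q j) F j.
Proof.
move=> us ut inj h1 h2.
rewrite -[LHS]big_filter -[RHS]big_filter -(big_map phi xpredT F).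
apply: perm_big; apply: uniq_perm.
- rewrite map_inj_in_uniq ?filter_uniq //.
  by move=> x y; rewrite !mem_filter => /andP[px sx] /andP[py sy]; apply: inj; rewrite inE ?sx ?px ?sy ?py.
- exact: filter_uniq.
move=> j; rewrite mem_filter; apply/mapP/idP.
  by move=> [x0]; rewrite mem_filter => /andP[pI si] ->; rewrite andbC; apply: h1.
move=> /andP[qj tj]; have [x0 /andP[si pI] ->] := h2 j tj qj.
by exists x0; rewrite // mem_filter pI si.
Qed.
Section Count.
Variable R : realType.
Local Notation C := R[i].

Lemma sum_interval (T a b : nat) : (a <= b)%N -> (b < T)%N ->
  \sum_(0 <= m < T | (a < m <= b)%N) (1 : C) = (b - a)%:R.
Proof.
move=> ab bT.
rewrite (eq_bigr (fun _ => (1%N)%:R)) // -natr_sum; congr (_ %:R).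
rewrite (big_cat_nat (n:=a.+1)); [| lia | lia].
rewrite (big_cat_nat (n:=b.+1) (m:=a.+1)); [| lia | lia].
rewrite big_nat_cond big_pred0; last by move=> i; apply/negbTE; lia.
rewrite /=.
rewrite [X in (_ + (_ + X))%N]big_nat_cond [X in (_ + (_ + X))%N]big_pred0; last by move=> i; apply/negbTE; lia.
rewrite add0n addn0 big_nat_cond (eq_bigl (fun i => (a.+1 <= i < b.+1)%N && true)); last by move=> i; lia.
rewrite -big_nat_cond sum_nat_const_nat; lia.
Qed.

Lemma condM (N k m : nat) : (0 < k)%N ->
  ((N%:R / k%:R < m%:R :> R) && (m%:R <= (2 * N)%:R / k%:R :> R)) = (N < k * m <= 2 * N)%N.
Proof.
move=> k0; have kp : (0:R) < k%:R by rewrite ltr0n.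
by rewrite ltr_pdivrMr // ler_pdivlMr // -!natrM ltr_nat ler_nat mulnC.
Qed.

Lemma count_M (N k : nat) : (0 < k)%N ->
  \sum_(0 <= m < (2 * N).+1 | (N%:R / k%:R < m%:R :> R) && (m%:R <= (2 * N)%:R / k%:R :> R)) (1 : C)
  = ((2 * N) %/ k)%N%:R - (N %/ k)%N%:R.
Proof.
move=> k0.
rewrite (eq_bigl (fun m => (N %/ k < m <= (2 * N) %/ k)%N)); last first.
  by move=> m; rewrite condM // ltn_divLR // leq_divRL // mulnC.
rewrite sum_interval ?natrB //.
- by apply: leq_div2r; lia.
- by apply: leq_div2r; lia.
- by rewrite ltnS leq_div.
Qed.

Lemma count_eq (N l d q : nat) (a : int) : (0 < l)%N -> (0 < d)%N -> (0 < q)%N ->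
  (l%:Z %| a)%Z ->
  \sum_(N.+1 <= n < (2 * N).+1 | ((l * d) %| n)%N && ((l * q) %| `|n%:Z - a|)%N) (1 : C)
  = (q%:R)^-1 * ((((2 * N) %/ (l * d))%N%:R - (N %/ (l * d))%N%:R)
     + \sum_(1 <= j < q) eq_ q (- (j%:R * a%:~R) / l%:R) *
          sum_m N l d (fun m => eq_ q (j%:R * d%:R * m%:R))).
Proof.
move=> l0 d0 q0 /dvdzP[b ->].
have ld0 : (0 < l * d)%N by rewrite muln_gt0 l0 d0.
rewrite big_mkcondr /=.
pose P := (fun m : nat => (N%:R / (l * d)%:R < m%:R :> R) && (m%:R <= (2 * N)%:R / (l * d)%:R :> R)).
rewrite -(@big_reindex_seq _ _ _ (index_iota 0 (2 * N).+1) _ P _ (fun m => (l * d * m)%N)); first last.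
- move=> n; rewrite mem_index_iota => /andP[n1 n2] /dvdnP[m nE].
  have E : (l * d * m = n)%N by rewrite nE mulnC.
  exists m; last by rewrite E.
  have mn : (m <= n)%N by rewrite nE leq_pmulr.
  rewrite mem_index_iota /P condM // E; lia.
- move=> m; rewrite mem_index_iota /P condM // => _ /andP[h1 h2].
  by rewrite mem_index_iota dvdn_mulr // h1 ltnS h2.
- move=> x y /andP[_ _] /andP[_ _] /eqP; rewrite eqn_mul2l eqn0Ngt ld0 /= => /eqP //.
- exact: iota_uniq.
- exact: iota_uniq.
have qR : (q%:R : C) != 0 by rewrite pnatr_eq0 -lt0n.
have lR : (l%:R : R) != 0 by rewrite pnatr_eq0 -lt0n.
have qR' : (q%:R : R) != 0 by rewrite pnatr_eq0 -lt0n.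
have ind : forall i : nat, (if (l * q %| `|((l * d * i)%N%:Z - b * l%:Z)%R|)%N then (1:C) else 0)
   = q%:R^-1 * \sum_(0 <= j < q) ee (j%:R * (((d * i)%N%:Z - b)%R)%:~R / q%:R : R).
  move=> i; rewrite ee_sum //.
  have -> : (l * q %| `|((l * d * i)%N%:Z - b * l%:Z)%R|)%N
      = ((l%:Z * q%:Z) %| (l%:Z * ((d * i)%N%:Z - b)))%Z.
    rewrite dvdzE; congr (_ %| _)%N; congr (absz _).
    by rewrite mulrBr !PoszM mulrA [b * _]mulrC.
  rewrite dvdz_mul2l; last by rewrite -lt0n.
  by case: ifP; rewrite ?mulr0 ?mulVf.
rewrite (eq_bigr _ (fun i _ => ind i)) -mulr_sumr; congr (_ * _).
rewrite exchange_big big_ltn //=.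
congr (_ + _).
  under eq_bigr do rewrite !mul0r ee0.
  by rewrite /P count_M.
apply: eq_bigr => j _; rewrite /sum_m mulr_sumr; apply: eq_bigr => i _.
rewrite /eq_ -eeD; congr ee.
rewrite intrB intrM -!pmulrn natrM.
by field; rewrite lR qR'.
Qed.
End Count.
Section Part1.
Variable R : realType.
Local Notation C := R[i].
Variables (Q : nat) (g : nat -> R).
Hypothesis hg : forall q : nat, (Q < q)%N -> g q = 0.

Lemma convfE (n : nat) : (0 < n)%N ->
  convf g n = \sum_(1 <= d < Q.+1 | (d %| n)%N) g d.
Proof.
move=> n0; rewrite /convf (bigID (fun d => (d <= Q)%N)) /=.
rewrite [X in _ + X]big1 ?addr0; last by move=> d; rewrite -ltnNge => /hg.
apply: (@big_reindex_seq _ _ _ _ _ _ _ id).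
- exact: divisors_uniq.
- exact: iota_uniq.
- by [].
- move=> d dn dQ; have dn' : (d %| n)%N by rewrite dvdn_divisors.
  rewrite mem_index_iota ?dn ?dn' andbT; have := dvdn_gt0 n0 dn'; lia.
- move=> d; rewrite mem_index_iota => /andP[d1 dQ] dn; exists d => //.
  rewrite -dvdn_divisors // dn /=; lia.
Qed.

Definition cnt (N : nat) (a : int) (d1 d2 : nat) : C :=
  \sum_(N.+1 <= n < (2 * N).+1 | (d1 %| n)%N && (d2 %| `|n%:Z - a|)%N) 1.

Lemma Cf_pairs (N : nat) (a : int) : a <= N%:Z ->
  (Cf (convf g) N a)%:C = \sum_(1 <= d1 < Q.+1) \sum_(1 <= d2 < Q.+1)
      ((g d1 * g d2)%:C * cnt N a d1 d2).
Proof.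
move=> aN.
rewrite /Cf rmorph_sum.
rewrite (eq_big_nat _ _ (F2 := fun n => \sum_(1 <= d1 < Q.+1) \sum_(1 <= d2 < Q.+1)
      ((g d1 * g d2)%:C * (if (d1 %| n)%N && (d2 %| `|n%:Z - a|)%N then 1 else 0)))); last first.
  move=> n /andP[n1 n2].
  have m0 : (0 < `|n%:Z - a|)%N.
    rewrite absz_gt0 subr_eq0; apply/negP => /eqP E.
    by move: aN; rewrite -E lez_nat; lia.
  rewrite rmorphM !convfE //; last by lia.
  rewrite !rmorph_sum big_distrlr /= big_mkcond; apply: eq_bigr => d1 _.
  rewrite big_mkcond /=; case: ifP => h1.
    rewrite big_mkcond /=; apply: eq_bigr => d2 _.
    case: ifP => h2 /=; first by rewrite mulr1 rmorphM.
    by rewrite mulr0.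
  by symmetry; apply: big1 => d2 _; rewrite /= mulr0.
rewrite exchange_big; apply: eq_bigr => d1 _.
rewrite exchange_big; apply: eq_bigr => d2 _.
rewrite -mulr_sumr /cnt; congr (_ * _).
by rewrite [RHS]big_mkcond.
Qed.

Lemma MT_Rf (N : nat) (a : int) : a != 0 ->
  MT g N Q a + Rf g N Q a = \sum_(l <- divisors `|a|%N) \sum_(1 <= d < Q.+1)
     \sum_(1 <= q < Q.+1 | coprime d q) ((g (l * d)%N * g (l * q)%N)%:C * cnt N a (l * d) (l * q)).
Proof.
move=> a0.
have a0' : (0 < `|a|)%N by rewrite absz_gt0.
rewrite /MT /Rf -big_split /=; rewrite big_seq [RHS]big_seq; apply: eq_bigr => l lin.
have la : (l %| `|a|)%N by rewrite dvdn_divisors.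
have l0 : (0 < l)%N by apply: dvdn_gt0 la.
rewrite /sum_cop -big_split /=; rewrite big_seq [RHS]big_seq; apply: eq_bigr => d din.
rewrite -big_split /=; rewrite big_seq_cond [RHS]big_seq_cond; apply: eq_bigr => q /andP[qin _].
move: din qin; rewrite !mem_index_iota => /andP[d0 _] /andP[q0 _].
rewrite /cnt count_eq //.
rewrite !rmorphM rmorphB /= !rmorph_nat fmorphV /= rmorph_nat.
ring.
Qed.

Lemma cnt0 (N : nat) (a : int) (d1 d2 : nat) : ~~ (gcdn d1 d2 %| `|a|)%N -> cnt N a d1 d2 = 0.
Proof.
rewrite /cnt => h; apply: big_pred0 => n; apply/negbTE/negP => /andP[h1 h2].
apply/negP: h.
have e1 : (gcdn d1 d2 %| n)%N := dvdn_trans (dvdn_gcdl _ _) h1.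
have e2 : (gcdn d1 d2 %| `|n%:Z - a|)%N := dvdn_trans (dvdn_gcdr _ _) h2.
have : ((gcdn d1 d2)%:Z %| n%:Z - (n%:Z - a))%Z.
  by apply: rpredB; [exact: e1 | exact: e2].
by rewrite opprB addrC subrK negbK.
Qed.


Lemma mem_pairs (T1 T2 : eqType) (s1 : seq T1) (s2 : seq T2) x y :
  ((x, y) \in [seq (a, b) | a <- s1, b <- s2]) = (x \in s1) && (y \in s2).
Proof.
apply/allpairsP/andP => [[[a b] /= [ha hb [-> ->]]]|[hx hy]]; first by split.
by exists (x, y).
Qed.

Lemma pairs_uniq (T1 T2 : eqType) (s1 : seq T1) (s2 : seq T2) :
  uniq s1 -> uniq s2 -> uniq [seq (a, b) | a <- s1, b <- s2].
Proof. by move=> u1 u2; apply: allpairs_uniq => // -[? ?] [? ?]. Qed.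

Lemma triple_pairs (N : nat) (a : int) : a != 0 ->
  \sum_(l <- divisors `|a|%N) \sum_(1 <= d < Q.+1)
     \sum_(1 <= q < Q.+1 | coprime d q) ((g (l * d)%N * g (l * q)%N)%:C * cnt N a (l * d) (l * q))
  = \sum_(1 <= d1 < Q.+1) \sum_(1 <= d2 < Q.+1) ((g d1 * g d2)%:C * cnt N a d1 d2).
Proof.
move=> a0.
have a0' : (0 < `|a|)%N by rewrite absz_gt0.
pose G (p : nat * nat) := (g p.1 * g p.2)%:C * cnt N a p.1 p.2.
pose I := index_iota 1 Q.+1.
pose s := [seq (l, dq) | l <- divisors `|a|%N, dq <- [seq (d, q) | d <- I, q <- I]].
pose t := [seq (d, q) | d <- I, q <- I].
pose P (x : nat * (nat * nat)) := [&& coprime x.2.1 x.2.2, (x.1 * x.2.1 <= Q)%N & (x.1 * x.2.2 <= Q)%N].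
pose phi (x : nat * (nat * nat)) := ((x.1 * x.2.1)%N, (x.1 * x.2.2)%N).
have -> : \sum_(1 <= d1 < Q.+1) \sum_(1 <= d2 < Q.+1) ((g d1 * g d2)%:C * cnt N a d1 d2)
    = \sum_(y <- t | (gcdn y.1 y.2 %| `|a|)%N) G y.
  rewrite [RHS]big_mkcond [RHS]big_allpairs_dep /=; apply: eq_bigr => d1 _.
  rewrite big_mkcond /=; apply: eq_bigr => d2 _.
  by case: ifP => // /negbT /cnt0 ->; rewrite mulr0.
have -> : \sum_(l <- divisors `|a|%N) \sum_(1 <= d < Q.+1)
     \sum_(1 <= q < Q.+1 | coprime d q) ((g (l * d)%N * g (l * q)%N)%:C * cnt N a (l * d) (l * q))
    = \sum_(x <- s | P x) G (phi x).
  rewrite [RHS]big_mkcond [RHS]big_allpairs_dep /=; apply: eq_bigr => l _.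
  rewrite big_allpairs_dep /=; apply: eq_bigr => d _.
  rewrite big_mkcond /=; apply: eq_bigr => q _.
  rewrite /P /G /phi /=; case: (coprime d q) => //=.
  case: leqP => hd /=; last by rewrite (hg _ hd) mul0r rmorph0 mul0r.
  by case: leqP => hq //=; rewrite (hg _ hq) mulr0 rmorph0 mul0r.
have Iu : uniq I by apply: iota_uniq.
apply: big_reindex_seq.
- by apply: pairs_uniq; [apply: divisors_uniq | apply: pairs_uniq].
- by apply: pairs_uniq.
- move=> [l [d q]] [l' [d' q']]; rewrite !inE /P /phi /= !mem_pairs.
  move=> /andP[/andP[lin _] /and3P[cop _ _]] /andP[/andP[lin' _] /and3P[cop' _ _]] [e1 e2].
  have l0 : (0 < l)%N by apply: (dvdn_gt0 a0'); rewrite dvdn_divisors.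
  have l0' : (0 < l')%N by apply: (dvdn_gt0 a0'); rewrite dvdn_divisors.
  have ell : l = l'.
    have := congr1 (fun p => gcdn p.1 p.2) (erefl (l * d, l * q)%N).
    rewrite /= {2}e1 {2}e2 -!muln_gcdr (eqP cop) (eqP cop') !muln1.
    by [].
  subst l'.
  by move/eqP: e1; rewrite eqn_mul2l eqn0Ngt l0 /= => /eqP ->; move/eqP: e2; rewrite eqn_mul2l eqn0Ngt l0 /= => /eqP ->.
- move=> [l [d q]]; rewrite /P /phi /= !mem_pairs /I !mem_index_iota.
  move=> /andP[lin /andP[/andP[d1 _] /andP[q1 _]]] /and3P[cop hd hq].
  have la : (l %| `|a|)%N by rewrite dvdn_divisors.
  have l0 : (0 < l)%N by apply: dvdn_gt0 a0' la.
  rewrite -muln_gcdr (eqP cop) muln1 la andbT.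
  rewrite !ltnS hd hq !muln_gt0 l0 /=; lia.
- move=> [d1 d2]; rewrite /t !mem_pairs /I !mem_index_iota /= => /andP[/andP[h1 h1'] /andP[h2 h2']] hG.
  set G0 := gcdn d1 d2.
  have G0p : (0 < G0)%N by rewrite gcdn_gt0; lia.
  have G1 : (G0 %| d1)%N by apply: dvdn_gcdl.
  have G2 : (G0 %| d2)%N by apply: dvdn_gcdr.
  have E1 : (G0 * (d1 %/ G0) = d1)%N by rewrite mulnC divnK.
  have E2 : (G0 * (d2 %/ G0) = d2)%N by rewrite mulnC divnK.
  exists (G0, (d1 %/ G0, d2 %/ G0))%N; last by rewrite /phi /= E1 E2.
  rewrite /s /P /= !mem_pairs /I !mem_index_iota E1 E2.
  have hdiv : G0 \in divisors `|a|%N by rewrite -dvdn_divisors.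
  have q1 : (0 < d1 %/ G0)%N by rewrite divn_gt0 // dvdn_leq //; lia.
  have q2 : (0 < d2 %/ G0)%N by rewrite divn_gt0 // dvdn_leq //; lia.
  have q1' : (d1 %/ G0 < Q.+1)%N by rewrite ltnS (leq_trans (leq_div _ _)) //; lia.
  have q2' : (d2 %/ G0 < Q.+1)%N by rewrite ltnS (leq_trans (leq_div _ _)) //; lia.
  have cop : coprime (d1 %/ G0) (d2 %/ G0).
    have : (G0 * gcdn (d1 %/ G0) (d2 %/ G0) = G0 * 1)%N.
      by rewrite muln_gcdr E1 E2 muln1.
    by move/eqP; rewrite eqn_mul2l eqn0Ngt G0p.
  rewrite hdiv q1 q1' q2 q2' cop /=; lia.
Qed.


End Part1.
Section Part2.
Variable R : realType.
Local Notation C := R[i].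

Definition zs (M : nat) : seq int := [seq (i%:Z - M%:Z) | i <- index_iota 0 (2 * M).+1].

Lemma sum_nzE (M : nat) (F : int -> C) : sum_nz M F = \sum_(a <- zs M | a != 0) F a.
Proof.
rewrite /sum_nz -(big_mkord (fun i => i%:Z - M%:Z != 0) (fun i => F (i%:Z - M%:Z))).
by rewrite /zs big_map.
Qed.

Lemma zs_uniq M : uniq (zs M).
Proof.
rewrite map_inj_uniq ?iota_uniq // => x y /eqP; rewrite subr_eq subrK => /eqP [].
by [].
Qed.

Lemma mem_zs M a : (a \in zs M) = (`|a| <= M)%N.
Proof.
apply/mapP/idP.
  move=> [x0]; rewrite mem_index_iota => /andP[_ hi] ->; lia.
move=> ha; exists (absz (a + M%:Z)); first by rewrite mem_index_iota; lia.
lia.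
Qed.

Lemma divisors_sum (M n : nat) (F : nat -> C) : (0 < n)%N -> (n <= M)%N ->
  \sum_(d <- divisors n) F d = \sum_(1 <= d < M.+1 | (d %| n)%N) F d.
Proof.
move=> n0 nM.
apply: (@big_reindex_seq _ _ _ _ _ predT _ id).
- exact: divisors_uniq.
- exact: iota_uniq.
- by [].
- move=> d dn _; have dn' : (d %| n)%N by rewrite dvdn_divisors.
  rewrite mem_index_iota dn' andbT; have := dvdn_gt0 n0 dn'; have := dvdn_leq n0 dn'; lia.
- move=> d; rewrite mem_index_iota => /andP[d1 dQ] dn; exists d => //.
  by rewrite andbT -dvdn_divisors.
Qed.

Lemma step1 (M : nat) (K : int -> C) (T : nat -> int -> C)
  (hK : forall a, (M < `|a|)%N -> K a = 0) :
  \sum_(a <- zs M | a != 0) K a * \sum_(l <- divisors `|a|%N) T l a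
  = \sum_(1 <= l < M.+1) \sum_(b <- zs M | b != 0) K (b * l%:Z) * T l (b * l%:Z).
Proof.
rewrite big_seq_cond.
rewrite (eq_bigr (fun a => \sum_(1 <= l < M.+1 | (l %| `|a|)%N) K a * T l a)); last first.
  move=> a /andP[az a0]; rewrite mulr_sumr (@divisors_sum M) //.
    by rewrite absz_gt0.
  by rewrite -mem_zs.
rewrite (exchange_big_dep predT) //=; apply: eq_big_nat => l /andP[l1 _].
rewrite [RHS](bigID (fun b : int => (absz (b * l%:Z)%R <= M)%N)) /=.
rewrite [X in _ = _ + X]big1 ?addr0; last first.
  by move=> b /andP[_ hb]; rewrite hK ?mul0r // ltnNge.
have l0 : l%:Z != 0 by rewrite -lt0n.
symmetry; apply: (@big_reindex_seq _ _ _ _ _ _ _ (fun b => b * l%:Z)).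
- exact: zs_uniq.
- exact: zs_uniq.
- by move=> x y _ _; apply: mulIf.
- move=> b bz /andP[b0 hb].
  have hb' : (b * l%:Z) \in zs M by rewrite mem_zs.
  rewrite hb' mulf_neq0 // abszM dvdn_mull //.
- move=> a az /andP[/andP[_ a0] la].
  have [b ab] : exists b, a = b * l%:Z.
    by apply/dvdzP; rewrite dvdzE.
  exists b => //.
  move: az a0; rewrite ab !mem_zs abszM => h1 h2.
  rewrite h1 andbT; apply/andP; split; last by apply: contraNneq h2 => ->; rewrite mul0r.
  apply: leq_trans h1; rewrite leq_pmulr //.
Qed.

Lemma eq_rev (q j : nat) (k : int) : (0 < q)%N -> (j <= q)%N ->
  eq_ q ((q - j)%N%:R * k%:~R : R) = eq_ q (- (j%:R * k%:~R)).
Proof.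
move=> q0 jq; rewrite /eq_ natrB //.
have qR : (q%:R : R) != 0 by rewrite pnatr_eq0 -lt0n.
have -> : (q%:R - j%:R) * k%:~R / q%:R = k%:~R + (- (j%:R * k%:~R)) / q%:R :> R by field.
by rewrite eeD ee_int mul1r.
Qed.

Lemma ee_cos (x : R) : ee x + ee (- x) = (cos (2 * pi * x) *+ 2)%:C.
Proof.
rewrite /ee mulrN cosN sinN /=.
by apply/eqP; rewrite eq_complex /= mulr2n subrr !eqxx.
Qed.

Lemma sum_cop_sum (Q : nat) (r : seq int) (P : pred int) (F : int -> nat -> nat -> C) :
  \sum_(b <- r | P b) sum_cop Q (F b) = sum_cop Q (fun d q => \sum_(b <- r | P b) F b d q).
Proof.
rewrite /sum_cop exchange_big; apply: eq_bigr => d _.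
by rewrite exchange_big.
Qed.

Lemma mul_sum_cop (Q : nat) (x : C) (F : nat -> nat -> C) :
  x * sum_cop Q F = sum_cop Q (fun d q => x * F d q).
Proof.
rewrite /sum_cop mulr_sumr; apply: eq_bigr => d _.
by rewrite mulr_sumr.
Qed.

Lemma sym (N M : nat) (K : int -> C) (hKe : forall a, K (- a) = K a)
  (l d q : nat) (c : C) : (0 < l)%N -> (0 < q)%N ->
  \sum_(b <- zs M | b != 0) K (b * l%:Z) * (c * \sum_(1 <= j < q)
      eq_ q (- (j%:R * (b * l%:Z)%:~R) / l%:R) * sum_m N l d (fun m => eq_ q (j%:R * d%:R * m%:R)))
  = c * \sum_(1 <= j < q) sum_m N l d (fun m => (cos (2 * pi * (j * d * m)%:R / q%:R))%:C *
        sum_nz M (fun a => K (a * l%:Z) * eq_ q (j%:R * a%:~R))).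
Proof.
move=> l0 q0.
have lR : (l%:R : R) != 0 by rewrite pnatr_eq0 -lt0n.
pose X : nat -> C := fun j : nat => sum_m N l d (fun m => eq_ q (j%:R * d%:R * m%:R)).
pose S : nat -> C := fun j : nat => \sum_(b <- zs M | b != 0) K (b * l%:Z) * eq_ q (j%:R * b%:~R).
pose Cj : nat -> C := fun j : nat => sum_m N l d (fun m => (cos (2 * pi * (j * d * m)%:R / q%:R))%:C).
have US : forall j, \sum_(b <- zs M | b != 0) K (b * l%:Z) * eq_ q (- (j%:R * b%:~R)) = S j.
  move=> j; rewrite /S.
  transitivity (\sum_(b <- zs M | b != 0) (fun a => K (a * l%:Z) * eq_ q (j%:R * a%:~R)) (- b)).
    by apply: eq_bigr => b _ /=; rewrite mulNr hKe intrN mulrN.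
  apply: (@big_reindex_seq _ _ _ _ _ _ _ (fun b => - b) (fun a => K (a * l%:Z) * eq_ q (j%:R * a%:~R)))
    => //; first (by apply: zs_uniq); first (by apply: zs_uniq).
  - by move=> x y _ _; apply: oppr_inj.
  - by move=> b; rewrite !mem_zs abszN oppr_eq0 => -> ->.
  - by move=> b; rewrite !mem_zs => h1 h2; exists (- b); rewrite ?opprK // mem_zs abszN h1 oppr_eq0.
rewrite (eq_bigr (fun b => c * \sum_(1 <= j < q) X j * (K (b * l%:Z) * eq_ q (- (j%:R * b%:~R))))); last first.
  move=> b _; rewrite mulrCA; congr (c * _); rewrite mulr_sumr; apply: eq_bigr => j _.
  have -> : (- (j%:R * (b * l%:Z)%:~R) / l%:R : R) = - (j%:R * b%:~R).
    rewrite intrM -[(l%:Z)%:~R]/(l%:R : R); by field.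
  by rewrite /X; ring.
rewrite -mulr_sumr; congr (c * _).
rewrite exchange_big /=.
rewrite (eq_bigr (fun j => X j * S j)); last by move=> j _; rewrite -mulr_sumr US.
rewrite [RHS](eq_bigr (fun j => Cj j * S j)); last first.
  by move=> j _; rewrite /Cj /sum_m -mulr_suml sum_nzE.
have Srev : forall j, (j <= q)%N -> S (q - j)%N = S j.
  move=> j jq; rewrite -(US j) /S; apply: eq_bigr => b _; by rewrite eq_rev.
have Xrev : forall j, (j <= q)%N -> X j + X (q - j)%N = Cj j *+ 2.
  move=> j jq; rewrite /X /Cj /sum_m -big_split /= -sumrMnl; apply: eq_bigr => m _.
  have e : (d%:R * m%:R : R) = ((d * m)%N%:Z)%:~R by rewrite -pmulrn natrM.
  rewrite -[(q - j)%N%:R * _ * _]mulrA e eq_rev // -e mulrA /eq_ mulNr ee_cos rmorphMn.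
  by rewrite !natrM mulrA.
have two : (2%:R : C) != 0 by rewrite pnatr_eq0.
apply: (mulIf two); rewrite !mulr_natr.
rewrite [in LHS]mulr2n.
rewrite [X in _ + X = _]big_nat_rev /= -big_split /= -sumrMnl.
apply: eq_big_nat => j /andP[j1 jq].
have -> : (1 + q - j.+1 = q - j)%N by lia.
rewrite Srev; last by lia.
by rewrite -mulrDl Xrev ?mulrnAl //; lia.
Qed.

Lemma eq_sum_cop (Q : nat) (F G : nat -> nat -> C) :
  (forall d q, (0 < d)%N -> (0 < q)%N -> F d q = G d q) -> sum_cop Q F = sum_cop Q G.
Proof.
move=> h; rewrite /sum_cop; apply: eq_big_nat => d /andP[d0 _].
rewrite big_seq_cond [RHS]big_seq_cond; apply: eq_bigr => q /andP[qin _].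
by apply: h => //; move: qin; rewrite mem_index_iota => /andP[].
Qed.

End Part2.
Theorem lemma3 (R : realType) (N h Q : nat) (g : nat -> R)
    (hg : forall q : nat, (Q < q)%N -> g q = 0) :
  (forall a : int, a != 0 -> a <= N%:Z ->
     (Cf (convf g) N a)%:C = MT g N Q a + Rf g N Q a) /\
  (forall K : int -> R[i],
     (forall a : int, K (- a) = K a) ->
     (forall a : int, (2 * h < `|a|)%N -> K a = 0) ->
     K 0 = (2 * h)%:R ->
     (2 * h <= N)%N ->
     sum_nz (2 * h) (fun a => K a * Rf g N Q a) + K 0 * (Cf (convf g) N 0)%:C =
     \sum_(1 <= l < (2 * h).+1) sum_cop Q (fun d q =>
        (g (l * d)%N * g (l * q)%N / q%:R)%:C *
        \sum_(1 <= j < q)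
          sum_m N l d (fun m =>
            (cos (2 * pi * (j * d * m)%:R / q%:R))%:C *
            sum_nz (2 * h) (fun a => K (a * l%:Z) * eq_ q (j%:R * a%:~R))))
     + (2 * h)%:R * (Cf (convf g) N 0)%:C).
Proof.
split.
  move=> a a0 aN.
  by rewrite (@Cf_pairs R Q g hg) // (@MT_Rf R Q g) // (@triple_pairs R Q g hg).
move=> K hKe hK K0 _.
rewrite K0; congr (_ + _).
rewrite sum_nzE /Rf.
rewrite (@step1 R (2 * h) K (fun l a => sum_cop Q (fun d q =>
     (g (l * d)%N * g (l * q)%N / q%:R)%:C *
     \sum_(1 <= j < q)
        eq_ q (- (j%:R * a%:~R) / l%:R) *
        sum_m N l d (fun m => eq_ q (j%:R * d%:R * m%:R))))) //.
apply: eq_big_nat => l /andP[l0 _].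
under eq_bigr do rewrite mul_sum_cop.
rewrite sum_cop_sum; apply: eq_sum_cop => d q d0 q0.
by apply: sym.
Qed.
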